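(* For a Tychonoff space $X$ the following are equivalent: (i) the strong dual $L(X)_\beta$ of $C_p(X)$ has a bounded resolution; (ii) $L(X)_\beta$ has a fundamental bounded resolution; (iii) $X$ is countable.
   Context: $C_p(X)$ is the space of continuous real-valued functions on $X$ with the pointwise topology. Its topological dual is identified with $L(X)$, the vector space with Hamel basis $X$ (finite linear combinations of point evaluations); $L(X)_\beta$ denotes it with the strong topology $\beta(L(X),C(X))$ of uniform convergence on bounded subsets of $C_p(X)$. Order $\mathbb{N}^{\mathbb{N}}$ pointwise. A bounded resolution of a locally convex space $F$ is a family $\{B_\alpha:\alpha\in\mathbb{N}^{\mathbb{N}}\}$ of bounded sets covering $F$ with $B_\alpha\subseteq B_\beta$ whenever $\alpha\le\beta$; it is fundamental if every bounded subset of $F$ lies in some $B_\alpha$. *)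

(* Defs.v *)
From HB Require Import structures.
From mathcomp Require Import all_boot all_order all_algebra.
From mathcomp Require Import all_classical all_reals all_analysis.
Set Implicit Arguments. Unset Strict Implicit. Unset Printing Implicit Defensive.
Import Order.TTheory GRing.Theory Num.Theory.
Import numFieldNormedType.Exports.
Local Open Scope classical_set_scope.
Local Open Scope ring_scope.

Definition tychonoff_space (X : topologicalType) : Prop :=
  completely_regular_space X /\ hausdorff_space X.

Section Defs.
Variables (R : realType) (X : topologicalType).

Definition CX : set (X -> R) := [set f | continuous f].

Definition Cp_bounded (A : set (X -> R)) : Prop :=
  A `<=` CX /\ forall x : X, exists M : R, forall f, A f -> `|f x| <= M.

(* L(X): finite linear combinations of point evaluations, represented by
   their (finitely supported) coefficient functions *)
Definition LX : set (X -> R) := [set u | finite_set [set x | u x != 0]].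

Definition pairing (u : X -> R) (f : X -> R) : R :=
  \sum_(x \in [set x | u x != 0]) (u x * f x).

(* bounded subsets of L(X)_beta: every seminorm
   p_A(u) = sup_{f in A} |<u,f>|  (A bounded in C_p(X)) is bounded on B *)
Definition Lbeta_bounded (B : set (X -> R)) : Prop :=
  B `<=` LX /\
  forall A, Cp_bounded A ->
    exists M : R, forall u f, B u -> A f -> `|pairing u f| <= M.

Definition le_NN (a b : nat -> nat) : Prop := forall n, (a n <= b n)%N.

Definition bounded_resolution (K : (nat -> nat) -> set (X -> R)) : Prop :=
  (forall a, Lbeta_bounded (K a)) /\
  (forall u, LX u -> exists a, K a u) /\
  (forall a b, le_NN a b -> K a `<=` K b).

Definition fundamental_bounded_resolution
    (K : (nat -> nat) -> set (X -> R)) : Prop :=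
  bounded_resolution K /\
  (forall B, Lbeta_bounded B -> exists a, B `<=` K a).

End Defs.

(* Main.v *)
Require Import Defs.
From HB Require Import structures.
From mathcomp Require Import all_boot all_order all_algebra.
From mathcomp Require Import all_classical all_reals all_analysis.
From mathcomp Require Import lra.
Set Implicit Arguments. Unset Strict Implicit. Unset Printing Implicit Defensive.
Import Order.TTheory GRing.Theory Num.Theory.
Import numFieldNormedType.Exports.
Local Open Scope classical_set_scope.
Local Open Scope ring_scope.

Lemma sep_fun (R : realType) (X : topologicalType) (a : X) (F : set X) :
  tychonoff_space X -> closed F -> ~ F a ->
  exists g : X -> R, [/\ continuous g, (forall x, 0 <= g x <= 1), g a = 0 &
     (forall x, F x -> g x = 1)].
Proof.
move=> [crs _] cF Fa.
have /(uniform_separatorP (R:=R)) [g [cg rg g0 g1]] := crs a F cF Fa.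
exists g; split => //.
- move=> x; have := rg (g x) (ex_intro2 _ _ x I erefl).
  by rewrite /= in_itv.
- by apply: g0; exists a.
- by move=> x Fx; apply: g1; exists x.
Qed.

Lemma sep_fin (R : realType) (X : topologicalType) (a : X) (F : set X) :
  tychonoff_space X -> finite_set F -> ~ F a ->
  exists g : X -> R, [/\ continuous g, (forall x, 0 <= g x <= 1), g a = 0 &
     (forall x, F x -> g x = 1)].
Proof.
move=> tX fF Fa; apply: sep_fun => //.
have := (proj1 (@accessible_finite_set_closed X)).
by apply => //; apply: hausdorff_accessible; case: tX.
Qed.


Lemma open_pre (R : realType) (X : topologicalType) (g : X -> R) (D : set R) :
  continuous g -> open D -> open (g @^-1` D).
Proof. by move=> cg oD; apply: open_comp => // x _; apply: cg. Qed.

Lemma step_lemma (R : realType) (X : topologicalType) (Sall W : set X) :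
  tychonoff_space X -> open W -> infinite_set (Sall `&` W) ->
  exists d U W', [/\ (Sall `&` W) d, open U, U d, U `<=` W &
    [/\ open W', W' `<=` W, infinite_set (Sall `&` W') &
    (forall x, U x -> ~ W' x)]].
Proof.
move=> tX oW inf.
have [a Aa] := infinite_setN0 inf.
have inf' := infinite_setD inf (finite_set1 a).
have [b [Bb nba]] := infinite_setN0 inf'.
have [g [cg g01 ga gb]] := @sep_fin R X a [set b] tX (finite_set1 b)
   (fun h : [set b] a => nba (esym h)).
have gb1 : g b = 1 by apply: gb.
pose P := (Sall `&` W) `&` [set x | 2^-1 <= g x].
pose Q := (Sall `&` W) `&` [set x | g x <= 2^-1].
have PQ : Sall `&` W `<=` P `|` Q.
  move=> x Hx; have [h|h] := leP (2^-1) (g x); [left|right] => //.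
  by split => //; rewrite /= ltW.
have [fP|iP] := pselect (finite_set P).
- have iQ : infinite_set Q.
    move=> fQ; apply: inf; apply: sub_finite_set PQ _.
    by rewrite finite_setU.
  exists b, (W `&` (g @^-1` [set y | 2/3 < y])), (W `&` (g @^-1` [set y | y < 2/3])).
  split => //.
  + by apply: openI => //; apply: open_pre => //; apply: open_gt.
  + by split => //=; [case: Bb | rewrite gb1; lra].
  + split.
    * by apply: openI => //; apply: open_pre => //; apply: open_lt.
    * by move=> x [].
    * apply: contra_not iQ; apply: sub_finite_set => x [[Sx Wx] /= gx].
      by split => //; split => //=; lra.
    * by move=> x [_ /= h1] [_ /= h2]; lra.
- exists a, (W `&` (g @^-1` [set y | y < 3^-1])), (W `&` (g @^-1` [set y | 3^-1 < y])).
  split => //.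
  + by apply: openI => //; apply: open_pre => //; apply: open_lt.
  + by case: Aa => _ Wa; split => //=; rewrite ga; lra.
  + split.
    * by apply: openI => //; apply: open_pre => //; apply: open_gt.
    * by move=> x [].
    * apply: contra_not iP; apply: sub_finite_set => x [[Sx Wx] /= gx].
      by split => //; split => //=; lra.
    * by move=> x [_ /= h1] [_ /= h2]; lra.
Qed.


Lemma disj_seq (R : realType) (X : topologicalType) (Sall : set X) :
  tychonoff_space X -> infinite_set Sall ->
  exists (d : nat -> X) (U : nat -> set X),
    [/\ (forall n, Sall (d n)), (forall n, open (U n)), (forall n, U n (d n)) &
     (forall n m x, (n < m)%N -> U n x -> ~ U m x)].
Proof.
move=> tX inf.
pose Inv (st : set X * (X * set X)) := open st.1 /\ infinite_set (Sall `&` st.1).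
pose Rel (st st' : set X * (X * set X)) := Inv st ->
  [/\ (Sall `&` st.1) st'.2.1, open st'.2.2, st'.2.2 st'.2.1, st'.2.2 `<=` st.1 &
    [/\ open st'.1, st'.1 `<=` st.1, infinite_set (Sall `&` st'.1) &
    (forall x, st'.2.2 x -> ~ st'.1 x)]].
have tot : forall st, {st' | Rel st st'}.
  move=> st; apply: cid.
  have [[oW iW]|nI] := pselect (Inv st); last by exists st.
  have [d [U [W' H]]] := step_lemma R tX oW iW.
  by exists (W', (d, U)).
have [x0 _] := infinite_setN0 inf.
have [f [f0 fS]] := dependent_choice tot (setT, (x0, setT)).
have inv : forall n, Inv (f n).
  elim => [|n IH]; first by rewrite f0; split; [exact: openT | rewrite setIT].
  by have [_ _ _ _ [? _ ? _]] := fS n IH.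
have dec : forall n m, (n <= m)%N -> (f m).1 `<=` (f n).1.
  move=> n m /subnK <-; elim: (m - n)%N => [|k IH] //=.
  rewrite addSn; have [_ _ _ _ [_ h _ _]] := fS _ (inv (k + n)%N).
  by move=> x /h /IH.
exists (fun n => (f n.+1).2.1), (fun n => (f n.+1).2.2); split.
- by move=> n; have [[] ] := fS n (inv n).
- by move=> n; have [] := fS n (inv n).
- by move=> n; have [] := fS n (inv n).
- move=> n m x nm Unx Umx.
  have [_ _ _ _ [_ _ _ h]] := fS n (inv n).
  apply: (h x Unx).
  have [_ _ _ h2 _] := fS m (inv m).
  by apply: (dec n.+1 m nm); apply: h2.
Qed.


Lemma pairing_single (R : realType) (X : topologicalType) (u f : X -> R) (d : X) :
  LX u -> u d != 0 -> (forall x, u x != 0 -> x != d -> f x = 0) ->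
  pairing u f = u d * f d.
Proof.
move=> Lu ud f0; rewrite /pairing (fsbigD1 d) //.
rewrite fsbig1 ?Monoid.simpm // => x [/= ux xd]; rewrite f0 ?mulr0 //.
by apply/eqP => xd'; apply: xd.
Qed.

Lemma cont_aff (R : realType) (X : topologicalType) (c : R) (g : X -> R) :
  continuous g -> continuous (fun x => c * (1 - g x)).
Proof.
move=> cg x.
have := @continuousM R X (fun=> c) ((fun=> 1) - g) x (@cst_continuous X R c x)
  (continuousB (@cst_continuous X R 1 x) (cg x)).
by [].
Qed.

Lemma supp_finite (R : realType) (X : topologicalType) (B : set (X -> R)) :
  tychonoff_space X -> Lbeta_bounded B ->
  finite_set [set x | exists u, B u /\ u x != 0].
Proof.
move=> tX [BL Bb]; apply: contrapT => inf.
have [d [U [Sd oU Ud disj]]] := disj_seq R tX inf.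
have [uu Hu] := choice Sd.
pose F n := [set x | uu n x != 0] `\` [set d n].
have Hg : forall n, exists g : X -> R,
    [/\ continuous g, (forall x, 0 <= g x <= 1), g (d n) = 0 &
     (forall x, (~` U n `|` F n) x -> g x = 1)].
  move=> n; apply: sep_fun => //.
    apply: closedU; first exact: open_closedC.
    have := (proj1 (@accessible_finite_set_closed X)).
    apply; first by apply: hausdorff_accessible; case: tX.
    by apply: sub_finite_set (BL _ (proj1 (Hu n))) => x [] //.
  by move=> [h|[_ h]]; [exact: h (Ud n) | exact: h].
have [gg Hgg] := choice Hg.
pose c n : R := n%:R / `|uu n (d n)|.
pose ff n := fun x => c n * (1 - gg n x).
have ff0 : forall n x, ~ U n x -> ff n x = 0.
  move=> n x Ux; have [_ _ _ h] := Hgg n.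
  by rewrite /ff h ?subrr ?mulr0 //; left.
have cpA : Cp_bounded (range ff).
  split.
    by move=> f [n _ <-]; rewrite /CX /=; apply: cont_aff; have [] := Hgg n.
  move=> x.
  have [[m Um]|nU] := pselect (exists m, U m x).
    exists `|ff m x| => f [n _ <-].
    have [->|nm] := eqVneq n m; first by [].
    rewrite ff0 ?normr0 //.
    move=> Unx; have [nm'|mn'] := ltnP n m.
      by apply: (disj n m x nm' Unx Um).
    have mn : (m < n)%N by rewrite ltn_neqAle eq_sym nm mn'.
    by apply: (disj m n x mn Um Unx).
  exists 0 => f [n _ <-]; rewrite ff0 ?normr0 // => Unx; apply: nU; by exists n.
have [M HM] := Bb _ cpA.
have [n Mn] : exists n : nat, M < n%:R.
  exists (Num.Def.archi_bound `|M|)%N.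
  by apply: le_lt_trans (archi_boundP (normr_ge0 M)); apply: ler_norm.
have := HM (uu n) (ff n) (proj1 (Hu n)) (ex_intro2 _ _ n I erefl).
have unz := proj2 (Hu n).
rewrite (@pairing_single R X (uu n) (ff n) (d n)) //; first last.
- move=> x ux xd; have [_ _ _ h] := Hgg n.
  by rewrite /ff h ?subrr ?mulr0 //; right; split => //= /eqP; apply/negP.
- exact: (BL _ (proj1 (Hu n))).
rewrite /ff; have [_ _ -> _] := Hgg n.
rewrite /c subr0 mulr1 normrM normf_div normr_nat normr_id.
rewrite mulrCA divff ?mulr1 ?normr_eq0 //.
by move=> h; have := lt_le_trans Mn h; rewrite ltxx.
Qed.


Lemma fin_boundR (R : realType) (T : eqType) (P : T -> R -> Prop) (s : seq T) :
  (forall x M M', M <= M' -> P x M -> P x M') ->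
  (forall x, x \in s -> exists M, P x M) ->
  exists M, 0 <= M /\ forall x, x \in s -> P x M.
Proof.
move=> mono; elim: s => [|a s IH] H; first by exists 0; split.
have [M [M0 HM]] := IH (fun x xs => H x (ltac:(by rewrite in_cons xs orbT))).
have [Ma HMa] := H a (mem_head _ _).
exists (Num.max M Ma); split; first by rewrite le_max M0.
move=> x; rewrite in_cons => /orP[/eqP->|xs].
  by apply: mono HMa; rewrite le_max lexx orbT.
by apply: mono (HM x xs); rewrite le_max lexx.
Qed.

Lemma fin_boundN (T : eqType) (P : T -> nat -> Prop) (s : seq T) :
  (forall x M M', (M <= M')%N -> P x M -> P x M') ->
  (forall x, x \in s -> exists M, P x M) ->
  exists M, forall x, x \in s -> P x M.
Proof.
move=> mono; elim: s => [|a s IH] H; first by exists 0%N.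
have [M HM] := IH (fun x xs => H x (ltac:(by rewrite in_cons xs orbT))).
have [Ma HMa] := H a (mem_head _ _).
exists (maxn M Ma).
move=> x; rewrite in_cons => /orP[/eqP->|xs].
  by apply: mono HMa; rewrite leq_maxr.
by apply: mono (HM x xs); rewrite leq_maxl.
Qed.

Lemma coef_bounded (R : realType) (X : topologicalType) (B : set (X -> R)) :
  tychonoff_space X -> Lbeta_bounded B ->
  exists M : R, 0 <= M /\ forall u x, B u -> `|u x| <= M.
Proof.
move=> tX Bd; have fS := supp_finite tX Bd.
case: Bd => BL Bb.
have [s Hs] := (proj1 (finite_seqP _)) fS.
have Hpts : forall x, x \in s -> exists M : R, forall u, B u -> `|u x| <= M.
  move=> x xs.
  have Sx : [set x | exists u, B u /\ u x != 0] x by rewrite Hs.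
  have [g [cg g01 gx g1]] := @sep_fin R X x
    ([set x | exists u, B u /\ u x != 0] `\` [set x]) tX
    (sub_finite_set (@subDsetl _ _ _) fS) (fun h => h.2 erefl).
  pose f := fun y => 1 * (1 - g y).
  have cpA : Cp_bounded [set f].
    split; first by move=> h ->; apply: cont_aff.
    by move=> y; exists `|f y| => h ->.
  have [Mx HMx] := Bb _ cpA.
  exists Mx => u Bu.
  have [ux0|uxn] := eqVneq (u x) 0.
    by rewrite ux0 normr0; apply: le_trans (HMx u f Bu erefl); apply: normr_ge0.
  have := HMx u f Bu erefl.
  rewrite (@pairing_single R X u f x (BL u Bu) uxn).
    by rewrite /f gx subr0 !mulr1.
  move=> y uy yx; rewrite /f g1 ?subrr ?mulr0 //; split; first by exists u.
  by move=> /= yx'; move: yx; rewrite yx' eqxx.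
have [M [M0 HM]] := @fin_boundR R X (fun x M => forall u, B u -> `|u x| <= M) s
(fun x M M' le h u Bu => le_trans (h u Bu) le) Hpts.
exists M; split => // u x Bu.
have [ux0|uxn] := eqVneq (u x) 0; first by rewrite ux0 normr0.
apply: HM => //.
have : [set` s] x by rewrite -Hs; exists u.
by [].
Qed.

Lemma sum_bound (R : realType) (T : eqType) (F : T -> R) (s : seq T) (C : R) :
  (forall x, x \in s -> `|F x| <= C) ->
  `|\sum_(x <- s) F x| <= (size s)%:R * C.
Proof.
elim: s => [|a s IH] H; first by rewrite big_nil normr0 mul0r.
rewrite big_cons /= -addn1 natrD mulrDl mul1r addrC.
apply: le_trans (ler_normD _ _) _.
apply: lerD; last by apply: H; rewrite mem_head.
by apply: IH => x xs; apply: H; rewrite in_cons xs orbT.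
Qed.


Lemma archi_nat (R : realType) (M : R) : exists n : nat, M <= n%:R.
Proof.
exists (Num.Def.archi_bound `|M|)%N.
by apply/ltW; apply: le_lt_trans (archi_boundP (normr_ge0 M)); apply: ler_norm.
Qed.

Lemma countable_fund (R : realType) (X : topologicalType) :
  tychonoff_space X -> countable [set: X] ->
  exists K, fundamental_bounded_resolution (R:=R) (X:=X) K.
Proof.
move=> tX /countable_injP [i iinj].
have inj : injective i by move=> x y h; apply: iinj => //; apply: mem_set.
pose K := fun a : nat -> nat => [set u : X -> R | LX u /\
   (forall x, u x != 0 -> (i x <= a 0%N)%N) /\ (forall x, `|u x| <= (a 0%N)%:R)].
exists K; split; first (split; last split).
- move=> a; split; first by move=> u [].
  move=> A [_ pb].
  have unif : forall n, exists C : R, 0 <= C /\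
      forall x f, (i x < n)%N -> A f -> `|f x| <= C.
    elim => [|n [C [C0 HC]]]; first by exists 0; split.
    have [[x ix]|nx] := pselect (exists x, i x = n).
      have [Mx HMx] := pb x.
      exists (Num.max C Mx); split; first by rewrite le_max C0.
      move=> y f; rewrite ltnS leq_eqVlt => /orP[/eqP iy|iy] Af.
        have -> : y = x by apply: inj; rewrite iy ix.
        by apply: le_trans (HMx f Af) _; rewrite le_max lexx orbT.
      by apply: le_trans (HC y f iy Af) _; rewrite le_max lexx.
    exists C; split => // y f; rewrite ltnS leq_eqVlt => /orP[/eqP iy|iy] Af.
      by exfalso; apply: nx; exists y.
    exact: HC.
  have [C [C0 HC]] := unif (a 0%N).+1.
  exists ((a 0%N).+1%:R * ((a 0%N)%:R * C)) => u f [Lu [ui ub]] Af.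
  rewrite /pairing.
  have fin : finite_set ([set x | u x != 0] `&` (fun x => u x * f x) @^-1` [set~ 0]).
    by apply: sub_finite_set Lu => x [].
  have mem := in_finite_support fin.
  apply: le_trans (sum_bound _) _.
    move=> x; rewrite mem inE => -[/= ux _].
    rewrite normrM; apply: ler_pM; [exact: normr_ge0 | exact: normr_ge0 |
      exact: ub | apply: HC => //; rewrite ltnS; exact: ui].
  apply: ler_wpM2r; first by apply: mulr_ge0.
  rewrite ler_nat.
  set s := finite_support _ _ _.
  have us : uniq s by apply: finite_support_uniq.
  have := @uniq_leq_size _ (map i s) (iota 0 (a 0%N).+1).
  rewrite size_map size_iota; apply.
    by rewrite (map_inj_in_uniq (fun x y _ _ => @inj x y)).
  move=> y /mapP [x xs ->]; rewrite mem_iota /= add0n ltnS.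
  by move: xs; rewrite mem inE => -[/= ux _]; apply: ui.
- move=> u Lu.
  have [s Hs] := (proj1 (finite_seqP _)) Lu.
  pose P := fun x m => (i x <= m)%N /\ `|u x| <= m%:R :> R.
  have mono : forall x M M', (M <= M')%N -> P x M -> P x M'.
    move=> x M M' le [h1 h2]; split; first exact: leq_trans h1 le.
    by apply: le_trans h2 _; rewrite ler_nat.
  have pts : forall x, x \in s -> exists M, P x M.
    move=> x _; have [n Hn] := archi_nat `|u x|.
    exists (maxn (i x) n); split; first by rewrite leq_maxl.
    by apply: le_trans Hn _; rewrite ler_nat leq_maxr.
  have [N HN] := @fin_boundN X P s mono pts.
  exists (fun=> N); split => //; split.
    move=> x ux; have : [set` s] x by rewrite -Hs.
    by move=> /= /HN [].
  move=> x; have [ux0|ux] := eqVneq (u x) 0; first by rewrite ux0 normr0.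
  have : [set` s] x by rewrite -Hs.
  by move=> /= /HN [].
- move=> a b ab u [Lu [ui ub]]; split => //; split.
    by move=> x /ui h; apply: leq_trans h (ab 0%N).
  by move=> x; apply: le_trans (ub x) _; rewrite ler_nat.
- move=> B Bd.
  have fS := supp_finite tX Bd.
  have [M [M0 HM]] := coef_bounded tX Bd.
  have [s Hs] := (proj1 (finite_seqP _)) fS.
  have [N1 HN1] := @fin_boundN X (fun x m => (i x <= m)%N) s
    (fun x M M' le h => leq_trans h le) (fun x _ => ex_intro _ (i x) (leqnn _)).
  have [N2 HN2] := archi_nat M.
  exists (fun=> maxn N1 N2) => u Bu; split; first exact: (proj1 Bd).
  split.
    move=> x ux; have : [set` s] x by rewrite -Hs; exists u.
    by move=> /= /HN1 h; apply: leq_trans h _; rewrite leq_maxl.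
  move=> x; apply: le_trans (HM u x Bu) _; apply: le_trans HN2 _.
  by rewrite ler_nat leq_maxr.
Qed.


Lemma sub_cnt (T : Type) (A B : set T) : A `<=` B -> countable B -> countable A.
Proof.
move=> AB /countable_injP [f finj]; apply/countable_injP; exists f.
move=> x y /set_mem Ax /set_mem Ay; apply: finj; apply: mem_set; exact: AB.
Qed.

Lemma cnt_nat : countable [set: nat].
Proof. by apply/countable_injP; exists id => x y. Qed.

Lemma res_countable (R : realType) (X : topologicalType) :
  tychonoff_space X -> (exists K, bounded_resolution (R:=R) (X:=X) K) ->
  countable [set: X].
Proof.
move=> tX [K [Kb [Kcov Kmono]]].
pose S := fun b => [set x | exists u, K b u /\ u x != 0].
have fS : forall b, finite_set (S b) by move=> b; apply: supp_finite tX (Kb b).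
have Smono : forall a b, le_NN a b -> S a `<=` S b.
  by move=> a b ab x [u [Ku ux]]; exists u; split => //; apply: Kmono ab u Ku.
have Scov : forall x, exists b, S b x.
  move=> x; pose dl := fun y : X => if y == x then 1 else 0 : R.
  have Ld : LX dl.
    apply: sub_finite_set (finite_set1 x) => y /=.
    by rewrite /dl; case: ifP => [/eqP|_] //; rewrite eqxx.
  have [b Kb'] := Kcov dl Ld.
  by exists b, dl; split => //; rewrite /dl eqxx oner_eq0.
apply: contrapT => nc.
pose agree (a b : nat -> nat) k := forall j, (j < k)%N -> b j = a j.
pose T := fun a k => \bigcup_(b in [set b | agree a b k]) S b.
pose upd := fun (a : nat -> nat) k n => fun j => if j == k then n else a j.
have Tsplit : forall a k, ~ countable (T a k) ->
    exists n, ~ countable (T (upd a k n) k.+1).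
  move=> a k nT; apply: contrapT => H; apply: nT.
  have Hc : forall n, countable (T (upd a k n) k.+1).
    by move=> n; apply: contrapT => h; apply: H; exists n.
  apply: (@sub_cnt _ _ (\bigcup_(n in [set: nat]) T (upd a k n) k.+1)).
    move=> x [b ab Sbx]; exists (b k) => //; exists b => //.
    move=> j; rewrite ltnS leq_eqVlt => /orP[/eqP->|jk].
      by rewrite /upd eqxx.
    by rewrite /upd (ltn_eqF jk); apply: ab.
  by apply: bigcup_countable; [exact: cnt_nat | move=> n _; exact: Hc].
pose next := fun a k => match pselect (exists n, ~ countable (T (upd a k n) k.+1)) with
  | left h => projT1 (cid h) | right _ => 0%N end.
have next_spec : forall a k, ~ countable (T a k) ->
    ~ countable (T (upd a k (next a k)) k.+1).
  move=> a k nT; rewrite /next; case: pselect => [h|h].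
    exact: (projT2 (cid h)).
  by exfalso; apply: h; apply: Tsplit.
pose sq := nat_rect (fun _ => nat -> nat) (fun _ => 0%N)
  (fun k a => upd a k (next a k)).
have sqS : forall k, sq k.+1 = upd (sq k) k (next (sq k) k) by [].
have inv : forall k, ~ countable (T (sq k) k).
  elim => [|k IH]; last by rewrite sqS; apply: next_spec.
  move=> h; apply: nc; apply: sub_cnt h => x _.
  by have [b Sb] := Scov x; exists b.
pose al := fun j => sq j.+1 j.
have agr : forall k j, (j < k)%N -> sq k j = al j.
  elim => [//|k IH] j; rewrite ltnS leq_eqVlt => /orP[/eqP->|jk] //.
  by rewrite sqS /upd (ltn_eqF jk); apply: IH.
have invA : forall k, ~ countable (T al k).
  move=> k h; apply: (inv k); apply: sub_cnt h => x [b ab Sbx].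
  by exists b => // j jk; rewrite ab // agr.
have grow : forall k m, exists b, agree al b k /\
    exists s : seq X, [/\ uniq s, size s = m & forall x, x \in s -> S b x].
  move=> k; elim => [|m [b [ab [s [us ss Hs]]]]].
    by exists al; split => //; exists [::].
  have [x [Tx xs]] : exists x, T al k x /\ x \notin s.
    apply: contrapT => h; apply: (invA k).
    apply: sub_cnt (finite_set_countable (finite_seq s)) => y Ty /=.
    by apply: contrapT => ys; apply: h; exists y; split => //; apply/negP.
  case: Tx => b' ab' Sb'x.
  pose g := fun j => maxn (b j) (b' j).
  have gb : le_NN b g by move=> j; rewrite leq_maxl.
  have gb' : le_NN b' g by move=> j; rewrite leq_maxr.
  exists g; split.
    by move=> j jk; rewrite /g ab // ab' // maxnn.
  exists (x :: s); split => /=; [by rewrite xs us | by rewrite ss |].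
  move=> y; rewrite in_cons => /orP[/eqP->|ys].
    exact: Smono gb' _ Sb'x.
  exact: Smono gb _ (Hs y ys).
have [f Hf] := choice (fun k => grow k k).
pose ga := fun n => \max_(j < n.+2) f j n.
have fga : forall k, le_NN (f k) ga.
  move=> k n; rewrite /ga.
  have [kn|nk] := ltnP k n.+2.
    exact: (@leq_bigmax _ (fun j : 'I_n.+2 => f j n) (Ordinal kn)).
  have [ak _] := Hf k; have [an _] := Hf n.+1.
  rewrite ak; last by apply: leq_trans nk.
  rewrite -(an n (ltnSn n)).
  exact: (@leq_bigmax _ (fun j : 'I_n.+2 => f j n) (Ordinal (ltnSn n.+1))).
have [t Ht] := (proj1 (finite_seqP _)) (fS ga).
have [_ [s [us ss Hs]]] := Hf (size t).+1.
have sub : {subset s <= t}.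
  move=> y ys; have : S ga y by apply: Smono (fga _) _ (Hs y ys).
  by rewrite Ht.
by have := uniq_leq_size us sub; rewrite ss ltnn.
Qed.

Local Close Scope ring_scope.
Unset Implicit Arguments.

Theorem proposition3p7 (R : realType) (X : topologicalType) :
  tychonoff_space X ->
  [/\ ((exists K, bounded_resolution (R:=R) (X:=X) K) <->
        (exists K, fundamental_bounded_resolution (R:=R) (X:=X) K)),
      ((exists K, fundamental_bounded_resolution (R:=R) (X:=X) K) <->
        countable [set: X]) &
      ((exists K, bounded_resolution (R:=R) (X:=X) K) <->
        countable [set: X])].
Proof.
move=> tX.
have fb : (exists K, fundamental_bounded_resolution (R:=R) (X:=X) K) ->
    exists K, bounded_resolution (R:=R) (X:=X) K.
  by case=> K [h _]; exists K.
have bc := @res_countable R X tX.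
have cf := @countable_fund R X tX.
split; split => h.
- exact: cf (bc h).
- exact: fb h.
- exact: bc (fb h).
- exact: cf h.
- exact: bc h.
- exact: fb (cf h).
Qed.
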